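(* Let $t \in \mathbb{Q}_2$ with $|t - 1| \le 2^{-5}$ (i.e. $t \equiv 1 \pmod{32}$). Let $z \in \mathbb{Q}_2$ lie in $\overline{D}(\tfrac{19}{2}, 2^{-4})$ or in $\overline{D}(\tfrac{27}{2}, 2^{-4})$. Then the forward orbit of $z$ under $f_t$ is bounded.
   Context: Let $|\cdot|$ denote the $2$-adic absolute value on $\mathbb{C}_2$, normalized by $|2| = 1/2$. The notation $\overline{D}(a,\delta)$ denotes the closed disk $\{z \in \mathbb{C}_2 : |z-a| \le \delta\}$. For $t \in \mathbb{C}_2$, let $f_t(z) = -\tfrac32 t(-2z^3+3z^2)+1$. *)

(* Defs.v *)
From mathcomp Require Import all_boot all_order all_algebra.
Set Implicit Arguments. Unset Strict Implicit. Unset Printing Implicit Defensive.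
Import Order.TTheory GRing.Theory Num.Theory.
Local Open Scope ring_scope.

(* A 2-adic integer u in Z_2 is given by a coherent sequence of integer
   approximations: u n is congruent to u modulo 2^n, i.e.
   u (n+1) = u n  (mod 2^n).  Every element of Z_2 has such a
   representation (non-uniquely); every coherent sequence defines a unique
   element of Z_2. *)
Definition Z2seq := nat -> int.
Definition Z2coh (u : Z2seq) : Prop :=
  forall n : nat, (u n.+1 = u n %[mod (2 ^+ n : int)])%Z.

(* An element of Q_2 is written u / 2^e with e : nat and u in Z_2.
   The pair (e, u) represents u / 2^e. *)
Definition Q2 := (nat * Z2seq)%type.
Definition Q2coh (q : Q2) : Prop := Z2coh q.2.

Definition Q2add (p q : Q2) : Q2 :=
  ((p.1 + q.1)%N, fun n => (2 ^+ q.1) * p.2 n + (2 ^+ p.1) * q.2 n).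
Definition Q2mul (p q : Q2) : Q2 :=
  ((p.1 + q.1)%N, fun n => p.2 n * q.2 n).
Definition Q2opp (p : Q2) : Q2 := (p.1, fun n => - p.2 n).
Definition Q2sub (p q : Q2) : Q2 := Q2add p (Q2opp q).

Definition Q2const (a : int) (e : nat) : Q2 := (e, fun _ => a).

(* 2-adic absolute value, normalized by |2| = 1/2:
   Q2abs_le q k  <->  |q| <= 2^k.
   For q = u / 2^e we have |q| = 2^(e - v_2(u)), so |q| <= 2^k iff
   v_2(u) >= m := e - k, i.e. 2^m divides u (vacuous if m <= 0); since
   u = u m (mod 2^m), this is equivalent to u m = 0 (mod 2^m). *)
Definition Q2abs_le (q : Q2) (k : int) : Prop :=
  let m := (q.1%:Z - k)%R in
  (m <= 0)%R \/ (q.2 `|m|%N = 0 %[mod (2 ^+ `|m|%N : int)])%Z.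

Definition Q2closed_disk (a : Q2) (k : int) (z : Q2) : Prop :=
  Q2abs_le (Q2sub z a) k.

Definition f_t (t z : Q2) : Q2 :=
  let z2 := Q2mul z z in
  let z3 := Q2mul z2 z in
  Q2add
    (Q2mul (Q2mul (Q2const (-3) 1) t)
           (Q2add (Q2mul (Q2const (-2) 0) z3) (Q2mul (Q2const 3 0) z2)))
    (Q2const 1 0).

Definition bounded_orbit (g : Q2 -> Q2) (z : Q2) : Prop :=
  exists k : int, forall n : nat, Q2abs_le (iter n g z) k.

(* Main.v *)
Require Import Defs.
From mathcomp Require Import all_boot all_order all_algebra.
From mathcomp Require Import ring lra zify.
Import Order.TTheory GRing.Theory Num.Theory.
Local Open Scope ring_scope.

Definition Zl (x : rat) := exists a b : int, ~~ (2 %| b)%Z /\ x = a%:~R / b%:~R.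

Lemma odd_nz (b : int) : ~~ (2 %| b)%Z -> (b%:~R : rat) != 0.
Proof. move=> h; rewrite intr_eq0; apply: contra h => /eqP ->; exact: dvdz0. Qed.

Arguments odd_nz {b}.
Lemma oddM (b c : int) : ~~ (2 %| b)%Z -> ~~ (2 %| c)%Z -> ~~ (2 %| b * c)%Z.
Proof.
rewrite !unfold_in /= abszM => hb hc. by rewrite Euclid_dvdM // negb_or hb hc.
Qed.

Lemma Zl_int (a : int) : Zl a%:~R.
Proof. exists a, 1; split => //; by rewrite divr1. Qed.

Lemma Zl_nat (n : nat) : Zl n%:R.
Proof. have := Zl_int n; by rewrite -pmulrn. Qed.

Lemma ZlD x y : Zl x -> Zl y -> Zl (x + y).
Proof.
move=> [a [b [hb ->]]] [c [d [hd ->]]].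
exists (a * d + c * b), (b * d); split; first exact: oddM.
have := odd_nz hb; have := odd_nz hd => h1 h2.
rewrite !rmorphD !rmorphM /=. field. by rewrite h1 h2.
Qed.

Lemma ZlM x y : Zl x -> Zl y -> Zl (x * y).
Proof.
move=> [a [b [hb ->]]] [c [d [hd ->]]].
exists (a * c), (b * d); split; first exact: oddM.
have := odd_nz hb; have := odd_nz hd => h1 h2.
rewrite !rmorphM /=. field. by rewrite h1 h2.
Qed.

Lemma ZlN x : Zl x -> Zl (- x).
Proof. move=> [a [b [hb ->]]]; exists (- a), b; split => //; by rewrite rmorphN mulNr. Qed.

Lemma ZlB x y : Zl x -> Zl y -> Zl (x - y).
Proof. move=> hx hy; apply: ZlD => //; exact: ZlN. Qed.

Lemma ZlX x n : Zl x -> Zl (x ^+ n).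
Proof. move=> hx; elim: n => [|n ih]; first by rewrite expr0; exact: (Zl_nat 1). by rewrite exprS; apply: ZlM. Qed.

Lemma Zl_half x : Zl x -> Zl (x * (x + 1) / 2).
Proof.
move=> [a [b [hb ->]]].
have [c hc] : exists c : int, a * (a + b) = 2 * c.
  case: (boolP (2 %| a)%Z) => [/dvdzP [k ->]|ha].
    by exists (k * (k * 2 + b)); ring.
  have : (2 %| a + b)%Z by lia.
  move=> /dvdzP [k hk]; exists (a * k); rewrite hk; ring.
exists c, (b * b); split; first exact: oddM.
have := odd_nz hb => h1.
rewrite rmorphM /= -[c%:~R]/((c%:~R : rat)).
have -> : (c%:~R : rat) = (a * (a + b))%:~R / 2 by rewrite hc rmorphM /=; field.
rewrite rmorphM rmorphD /=. field. by rewrite h1.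
Qed.

Lemma Zl1 : Zl 1.
Proof. exact: (Zl_nat 1). Qed.
Definition gq (tt x : rat) : rat := (- 3 / 2) * tt * (- 2 * (x * x * x) + 3 * (x * x)) + 1.
Definition inS (x : rat) := exists w, Zl w /\
  (x = 19 / 2 + 16 * w \/ x = 3 + 4 * w \/ x = 27 / 2 + 16 * w \/ x = 2 + 4 * w).

#[local] Hint Resolve ZlD ZlM ZlB ZlN ZlX Zl_nat Zl_int Zl_half Zl1 : zl.

Lemma step tt x : (exists s, Zl s /\ tt = 1 + 32 * s) -> inS x -> inS (gq tt x).
Proof.
move=> [s [hs ->]] [w [hw [->|[->|[->|->]]]]]; rewrite /gq.
- pose qq : rat := (541) + (2^+4 * 3 * 19^+2) * s + (3^+2 * 17 * 19) * w + (2^+5 * 3^+2 * 17 * 19) * w * s + (2^+6 * 3^+4) * w^+2 + (2^+11 * 3^+4) * w^+2 * s + (2^+10 * 3) * w^+3 + (2^+15 * 3) * w^+3 * s; exists qq; rewrite /qq.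
  split; first by auto 20 with zl.
  right; left; by field.
- pose qq : rat := (2) + (3^+4) * s + (2^+4 * 3^+3) * w * s + (2^+4 * 3^+2 * 5) * w^+2 * s + (2^+2 * 3) * w^+3 + (2^+7 * 3) * w^+3 * s + (3^+2) * w^+2 + 27*(w*(w+1)/2); exists qq; rewrite /qq.
  split; first by auto 20 with zl.
  left; by field.
- pose qq : rat := (2^+3 * 5 * 41) + (2^+3 * 3^+8) * s + (3^+5 * 5^+2) * w + (2^+5 * 3^+5 * 5^+2) * w * s + (2^+6 * 3^+2 * 13) * w^+2 + (2^+11 * 3^+2 * 13) * w^+2 * s + (2^+10 * 3) * w^+3 + (2^+15 * 3) * w^+3 * s; exists qq; rewrite /qq.
  split; first by auto 20 with zl.
  right; right; right; by field.
- pose qq : rat := 1 + (2^+4 * 3) * s + (2 * 3^+2) * w + (2^+6 * 3^+2) * w * s + (2 * 3^+3) * w^+2 + (2^+6 * 3^+3) * w^+2 * s + (2^+4 * 3) * w^+3 + (2^+9 * 3) * w^+3 * s; exists qq; rewrite /qq.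
  split; first by auto 20 with zl.
  right; left; by field.
Qed.

Lemma inS_bound x : inS x -> Zl (2 * x).
Proof.
move=> [w [hw [->|[->|[->|->]]]]].
- have -> : 2 * (19 / 2 + 16 * w) = 19 + 32 * w :> rat by field.
  auto with zl.
- auto 10 with zl.
- have -> : 2 * (27 / 2 + 16 * w) = 27 + 32 * w :> rat by field.
  auto with zl.
- auto 10 with zl.
Qed.

Lemma modE (d x y : int) : (x = y %[mod d])%Z <-> (d %| x - y)%Z.
Proof. by split => [h|h]; [rewrite -eqz_mod_dvd h | apply/eqP; rewrite eqz_mod_dvd]. Qed.

Lemma coh_le (u : Z2seq) : Z2coh u -> forall m n, (m <= n)%N -> (2 ^+ m %| u n - u m)%Z.
Proof.
move=> hu m; elim=> [|n ih].
  by rewrite leqn0 => /eqP ->; rewrite subrr dvdz0.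
rewrite leq_eqVlt => /orP [/eqP ->|hm]; first by rewrite subrr dvdz0.
have -> : u n.+1 - u m = (u n.+1 - u n) + (u n - u m) by ring.
apply: rpredD; last exact: ih.
apply: dvdz_trans (dvdz_exp2l 2 (hm : (m <= n)%N)) _.
by apply/modE; apply: hu.
Qed.

Lemma coh_add p q : Q2coh p -> Q2coh q -> Q2coh (Q2add p q).
Proof.
move=> hp hq n; apply/modE => /=.
have -> : 2 ^+ q.1 * p.2 n.+1 + 2 ^+ p.1 * q.2 n.+1 - (2 ^+ q.1 * p.2 n + 2 ^+ p.1 * q.2 n)
  = 2 ^+ q.1 * (p.2 n.+1 - p.2 n) + 2 ^+ p.1 * (q.2 n.+1 - q.2 n) by ring.
apply: rpredD; apply: dvdz_mull; apply/modE; [exact: hp | exact: hq].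
Qed.

Lemma coh_mul p q : Q2coh p -> Q2coh q -> Q2coh (Q2mul p q).
Proof.
move=> hp hq n; apply/modE => /=.
have -> : p.2 n.+1 * q.2 n.+1 - p.2 n * q.2 n
  = p.2 n.+1 * (q.2 n.+1 - q.2 n) + (p.2 n.+1 - p.2 n) * q.2 n by ring.
apply: rpredD; [apply: dvdz_mull | apply: dvdz_mulr]; apply/modE; [exact: hq | exact: hp].
Qed.

Lemma coh_opp p : Q2coh p -> Q2coh (Q2opp p).
Proof.
move=> hp n; apply/modE => /=.
have -> : - p.2 n.+1 - - p.2 n = - (p.2 n.+1 - p.2 n) by ring.
rewrite rpredN; apply/modE; exact: hp.
Qed.

Lemma coh_const a e : Q2coh (Q2const a e).
Proof. by move=> n; apply/modE; rewrite /= subrr dvdz0. Qed.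

Lemma coh_f t z : Q2coh t -> Q2coh z -> Q2coh (f_t t z).
Proof.
move=> ht hz; rewrite /f_t.
apply: coh_add; last exact: coh_const.
apply: coh_mul; first by apply: coh_mul => //; exact: coh_const.
apply: coh_add; apply: coh_mul; try exact: coh_const;
  repeat apply: coh_mul => //.
Qed.

Lemma coh_iter t z j : Q2coh t -> Q2coh z -> Q2coh (iter j (f_t t) z).
Proof. move=> ht hz; elim: j => [|j ih] //=; exact: coh_f. Qed.

Definition rq (n : nat) (q : Q2) : rat := (q.2 n)%:~R / 2 ^+ q.1.

Lemma two_nz (e : nat) : (2 ^+ e : rat) != 0.
Proof. by rewrite expf_neq0. Qed.

Lemma rq_add n p q : rq n (Q2add p q) = rq n p + rq n q.
Proof.
rewrite /rq /= rmorphD !rmorphM !rmorphXn /= exprD.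
have := two_nz p.1; have := two_nz q.1 => h1 h2.
by field; rewrite h1 h2.
Qed.

Lemma rq_mul n p q : rq n (Q2mul p q) = rq n p * rq n q.
Proof.
rewrite /rq /= !rmorphM /= exprD.
have := two_nz p.1; have := two_nz q.1 => h1 h2.
by field; rewrite h1 h2.
Qed.

Lemma rq_opp n p : rq n (Q2opp p) = - rq n p.
Proof. by rewrite /rq /= rmorphN mulNr. Qed.

Lemma rq_sub n p q : rq n (Q2sub p q) = rq n p - rq n q.
Proof. by rewrite /Q2sub rq_add rq_opp. Qed.

Lemma rq_const n a e : rq n (Q2const a e) = a%:~R / 2 ^+ e.
Proof. by []. Qed.

Lemma rq_f n t z : rq n (f_t t z) = gq (rq n t) (rq n z).
Proof.
rewrite /f_t !(rq_add, rq_mul, rq_const) /gq.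
rewrite !expr0 expr1 !divr1.
have -> : ((-3 : int)%:~R : rat) = - 3 by [].
have -> : ((-2 : int)%:~R : rat) = - 2 by [].
by [].
Qed.

Lemma rq_iter n t z j : rq n (iter j (f_t t) z) = iter j (gq (rq n t)) (rq n z).
Proof. elim: j => [|j ih] //=; by rewrite rq_f ih. Qed.

Lemma hyp_abs q j : Q2coh q -> (0 < j)%N -> Q2abs_le q (- (j%:Z)) ->
  forall n, (q.1 + j <= n)%N -> exists w : int, rq n q = 2 ^+ j * w%:~R.
Proof.
move=> hq hj; rewrite /Q2abs_le.
have -> : (q.1%:Z - - j%:Z) = (q.1 + j)%N%:Z by rewrite opprK PoszD.
case=> [h|h] n hn; first by move: h; rewrite lez_nat; lia.
have h1 := @coh_le _ hq _ _ hn.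
have h2 : (2 ^+ (q.1 + j) %| q.2 n)%Z.
  have h' : (q.2 (q.1 + j)%N = 0 %[mod 2 ^+ (q.1 + j)])%Z := h.
  move/modE: h'; rewrite subr0 => h'.
  have -> : q.2 n = (q.2 n - q.2 (q.1 + j)%N) + q.2 (q.1 + j)%N by ring.
  exact: rpredD.
case/dvdzP: h2 => w hw; exists w.
rewrite /rq hw rmorphM rmorphXn /= exprD.
have := two_nz q.1 => h3.
by field; rewrite h3.
Qed.

Lemma concl q N : Q2coh q -> (forall n, (N <= n)%N -> Zl (2 * rq n q)) -> Q2abs_le q 1.
Proof.
move=> hq H; rewrite /Q2abs_le.
case E: q.1 => [|e]; first by left.
right.
have -> : `|(e.+1%:Z - 1)|%N = e by rewrite -addn1 PoszD addrK.
have hn : (N <= maxn N e)%N by rewrite leq_maxl.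
have he : (e <= maxn N e)%N by rewrite leq_maxr.
have [a [b [hb hab]]] := H _ hn.
set n := maxn N e in hn he hab.
have hb0 := odd_nz hb.
have hint : q.2 n * b = a * 2 ^+ e.
  apply: (intr_inj (R := rat)).
  rewrite !rmorphM rmorphXn /=.
  move: hab; rewrite /rq E exprS => hab.
  have h2 := two_nz e.
  have : (q.2 n)%:~R * b%:~R = (2 * ((q.2 n)%:~R / (2 * 2 ^+ e))) * b%:~R * 2 ^+ e :> rat.
    by field; rewrite h2.
  rewrite hab => ->. by field; rewrite hb0.
have hd : (2 ^+ e %| q.2 n)%Z.
  rewrite -(@Gauss_dvdzl _ _ b); first by rewrite hint dvdz_mull.
  rewrite coprimezE abszX /=.
  apply: coprimeXl; rewrite prime_coprime //.
apply/modE; rewrite subr0.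
have -> : q.2 e = q.2 n - (q.2 n - q.2 e) by ring.
apply: rpredB => //; exact: coh_le.
Qed.

Theorem mainTheorem6 (t z : Q2) :
  Q2coh t -> Q2coh z ->
  Q2abs_le (Q2sub t (Q2const 1 0)) (-5) ->
  (Q2closed_disk (Q2const 19 1) (-4) z \/ Q2closed_disk (Q2const 27 1) (-4) z) ->
  bounded_orbit (f_t t) z.
Proof.
move=> ht hz Ht Hz.
exists 1 => j.
apply: (@concl _ (t.1 + z.1 + 6)); first exact: coh_iter.
move=> n hn; rewrite rq_iter; apply: inS_bound.
have htq : Q2coh (Q2sub t (Q2const 1 0)).
  apply: coh_add => //; apply: coh_opp; exact: coh_const.
have [s hs] := @hyp_abs _ 5 htq isT Ht n ltac:(rewrite /=; lia).
rewrite rq_sub rq_const expr0 divr1 in hs.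
have Htt : exists s0, Zl s0 /\ rq n t = 1 + 32 * s0.
  exists s%:~R; split; first exact: Zl_int.
  by rewrite -[rq n t](subrK 1) hs addrC.
have Hz0 : inS (rq n z).
  case: Hz => Hz.
  - have hzq : Q2coh (Q2sub z (Q2const 19 1)).
      apply: coh_add => //; apply: coh_opp; exact: coh_const.
    have [w hw] := @hyp_abs _ 4 hzq isT Hz n ltac:(rewrite /=; lia).
    rewrite rq_sub rq_const expr1 in hw.
    exists w%:~R; split; first exact: Zl_int.
    left. rewrite -[rq n z](subrK (19%:~R / 2)) hw. by field.
  - have hzq : Q2coh (Q2sub z (Q2const 27 1)).
      apply: coh_add => //; apply: coh_opp; exact: coh_const.
    have [w hw] := @hyp_abs _ 4 hzq isT Hz n ltac:(rewrite /=; lia).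
    rewrite rq_sub rq_const expr1 in hw.
    exists w%:~R; split; first exact: Zl_int.
    right; right; left. rewrite -[rq n z](subrK (27%:~R / 2)) hw. by field.
elim: j => [|j ih] //=.
exact: step.
Qed.
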